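(* Let $m,K$ be positive integers and $b_1,\dots,b_{3m}$ positive integers with $K/4<b_i<K/2$ and $\sum_i b_i=mK$. Set $W=100(5m)^2K$, $a_i=b_i+W$, $A=\{a_1,\dots,a_{3m}\}$, $L=3W+K$, $\epsilon=1/(400(5m)^2)$, $h=\lfloor 4\epsilon L\rfloor$, $H=L+h$. Let $X$ be the multiset consisting of $a_1,\dots,a_{3m}$, $m$ copies of $-H$ and $m$ copies of $h$, and let $T_{\min}$ be a minimum-cost addition tree over $X$. Then $C(T_{\min})\ge m(H+h)$. Moreover, $C(T_{\min})=m(H+h)$ if and only if $(A,L)$ is a positive instance of 3-PARTITION.
   Context: An addition tree over a multiset $X$ is a full binary tree whose leaves are labeled by the elements of $X$ (each used once), each internal node having value equal to the sum of its children's values; its cost $C(T)$ is the sum of the absolute values of the values of its internal nodes, and $T_{\min}$ minimizes $C$. $(A,L)$ is a positive instance of 3-PARTITION if $A$ can be partitioned into $m$ disjoint submultisets each summing to $L$. *)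

(* Defs.v *)
From mathcomp Require Import all_boot all_order all_algebra.
Set Implicit Arguments. Unset Strict Implicit. Unset Printing Implicit Defensive.
Import Order.TTheory GRing.Theory Num.Theory.
Local Open Scope ring_scope.

Inductive tree := Leaf of int | Node of tree & tree.

Fixpoint leaves (t : tree) : seq int :=
  match t with Leaf z => [:: z] | Node l r => leaves l ++ leaves r end.

Fixpoint tvalue (t : tree) : int :=
  match t with Leaf z => z | Node l r => tvalue l + tvalue r end.

Fixpoint tcost (t : tree) : int :=
  match t with
  | Leaf _ => 0
  | Node l r => `|tvalue l + tvalue r| + tcost l + tcost r
  end.

Definition addition_tree (X : seq int) (t : tree) : Prop := perm_eq (leaves t) X.

Definition min_addition_tree (X : seq int) (t : tree) : Prop :=
  addition_tree X t /\ forall t', addition_tree X t' -> tcost t <= tcost t'.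

(* (A, L) positive instance of 3-PARTITION: the multiset A = {a_0..a_{n-1}}
   splits into m disjoint submultisets (blocks f^-1(j)) each summing to L. *)
Definition three_partition (n m : nat) (a : 'I_n -> int) (L : int) : Prop :=
  exists f : 'I_n -> 'I_m, forall j : 'I_m, \sum_(i | f i == j) a i = L.

(* Main.v *)
Require Import Defs.
From mathcomp Require Import all_boot all_order all_algebra.
From mathcomp Require Import zify ring.
Import Order.TTheory GRing.Theory Num.Theory.
Local Open Scope ring_scope.

Definition phi (w : int) : int :=
  if w == 0 then 1 else if 0 < w then w - 1 else if -2 <= w then 2 else 1.
Definition fl (w t : int) : int := if (0 < t) && (w != 0) then 1 else 0.
Definition Cc (w : int) : int :=
  if w == 0 then -10 else if w == 1 then -5 else if w == -1 then -5
  else if w == -2 then -1 else 0.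
Definition kk (w : int) : int :=
  if w == 1 then 1 else if w == 2 then 1 else if w == -1 then -1
  else if w == -3 then 1 else 0.
Definition Fine (Y w e t : int) : int := Cc w * e + 5 * kk w * t - 5 * Y * fl w t.
Definition Ghat (W Y w e t : int) : int := 5 * W * (phi w + fl w t) + Fine Y w e t.

Lemma phi_spec w : (w = 0 /\ phi w = 1) \/ (0 < w /\ phi w = w - 1) \/
  ((w = -1 \/ w = -2) /\ phi w = 2) \/ (w <= -3 /\ phi w = 1).
Proof. rewrite /phi; repeat case: ifP => ?; lia. Qed.
Lemma fl_spec w t : (0 < t /\ w <> 0 /\ fl w t = 1) \/ ((t <= 0 \/ w = 0) /\ fl w t = 0).
Proof. rewrite /fl; repeat case: ifP => ?; lia. Qed.

Definition Dslack (w1 w2 t1 t2 : int) : int :=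
  `|w1 + w2| - 1 + phi w1 + phi w2 - phi (w1 + w2)
  + fl w1 t1 + fl w2 t2 - fl (w1 + w2) (t1 + t2).

Lemma Dslack_ge0 w1 w2 t1 t2 : 0 <= t1 -> 0 <= t2 -> 0 <= Dslack w1 w2 t1 t2.
Proof.
move=> h1 h2; rewrite /Dslack.
move: (phi_spec w1) (phi_spec w2) (phi_spec (w1 + w2)).
move: (fl_spec w1 t1) (fl_spec w2 t2) (fl_spec (w1 + w2) (t1 + t2)).
set a := phi w1; set b := phi w2; set c := phi (w1+w2).
set d := fl w1 t1; set f := fl w2 t2; set g := fl (w1+w2) (t1+t2).
lia.
Qed.

Definition sfacts (K Y w e t : int) : bool :=
  [&& -Y < e < Y, 0 <= t < Y &
    [&& (w == 1) ==> (2 * e <= K - 1), (w == 0) ==> (e <= 0),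
        (w == -1) ==> (e <= -2 * K), (w == -2) ==> (e <= -3 * K) &
        (w == -3) ==> (e <= -4 * K)]].

Lemma Fine_bound (Y w e t : int) : 1 <= Y -> -Y < e < Y -> 0 <= t < Y ->
  -20 * Y <= Fine Y w e t <= 20 * Y.
Proof.
move=> hY he ht.
have hC : Cc w = -10 \/ Cc w = -5 \/ Cc w = -1 \/ Cc w = 0.
  by rewrite /Cc; repeat case: ifP => _; lia.
have hk : kk w = -1 \/ kk w = 0 \/ kk w = 1.
  by rewrite /kk; repeat case: ifP => _; lia.
have hf : fl w t = 0 \/ fl w t = 1.
  by rewrite /fl; repeat case: ifP => _; lia.
rewrite /Fine.
case: hC => [->|[->|[->|->]]]; case: hk => [->|[->|->]]; case: hf => [->|->]; lia.
Qed.

Definition zc (w1 w2 e t : int) : Prop :=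
  if (w1 == 0) && (w2 == 0) then e + t = 0
  else if ((w1 == 1) && (w2 == -1)) || ((w1 == -1) && (w2 == 1)) then t = 0 /\ e <= 0
  else if [|| (w1 == 1) && (w2 == 1), (w1 == 2) && (w2 == -3) | (w1 == -3) && (w2 == 2)]
  then t = 0 else False.

Definition mslack (W Y w1 w2 e1 e2 t1 t2 : int) : int :=
  5 * `|W * (w1 + w2) + (e1 + e2) + (t1 + t2)| - 5 * W + Ghat W Y w1 e1 t1
  + Ghat W Y w2 e2 t2 - Ghat W Y (w1 + w2) (e1 + e2) (t1 + t2).

Lemma merge_core (W Y K w1 w2 e1 e2 t1 t2 : int) :
  0 < K -> 1 <= Y -> 100 * Y <= W ->
  sfacts K Y w1 e1 t1 -> sfacts K Y w2 e2 t2 ->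
  sfacts K Y (w1 + w2) (e1 + e2) (t1 + t2) ->
  0 <= mslack W Y w1 w2 e1 e2 t1 t2 /\
  (mslack W Y w1 w2 e1 e2 t1 t2 = 0 -> zc w1 w2 (e1 + e2) (t1 + t2)).
Proof.
move=> hK hY hW f1 f2 f12.
have hD := @Dslack_ge0 w1 w2 t1 t2.
move: (f1) (f2) (f12) => /and3P[E1 T1 _] /and3P[E2 T2 _] /and3P[E3 T3 _].
have t1p : 0 <= t1 by case/andP: T1.
have t2p : 0 <= t2 by case/andP: T2.
have {}hD := hD t1p t2p.
have [Dpos|D0] : 1 <= Dslack w1 w2 t1 t2 \/ Dslack w1 w2 t1 t2 = 0 by lia.
  have key : mslack W Y w1 w2 e1 e2 t1 t2 =
    5 * `|W * (w1 + w2) + (e1 + e2) + (t1 + t2)| - 5 * (W * `|w1 + w2|)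
    + 5 * (W * Dslack w1 w2 t1 t2) + (Fine Y w1 e1 t1 + Fine Y w2 e2 t2
    - Fine Y (w1 + w2) (e1 + e2) (t1 + t2)).
    rewrite /mslack /Ghat /Dslack; ring.
  have WD : W <= W * Dslack w1 w2 t1 t2.
    by rewrite -[X in X <= _]mulr1 ler_pM2l //; lia.
  have hn : `|W * (w1 + w2)| = W * `|w1 + w2|.
    by rewrite normrM gtr0_norm //; lia.
  have := Fine_bound Y w1 e1 t1 hY E1 T1.
  have := Fine_bound Y w2 e2 t2 hY E2 T2.
  have := Fine_bound Y (w1 + w2) _ _ hY E3 T3.
  move: key hn WD.
  set F1 := Fine Y w1 e1 t1; set F2 := Fine Y w2 e2 t2.
  set F3 := Fine Y (w1 + w2) (e1 + e2) (t1 + t2).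
  set A := W * (w1 + w2); set B := W * `|w1 + w2|.
  set C := W * Dslack w1 w2 t1 t2.
  set sl := mslack _ _ _ _ _ _ _ _.
  clear f1 f2 f12 => key hn WD Fb3 Fb2 Fb1.
  move: E1 E2 E3 T1 T2 T3 Fb1 Fb2 Fb3.
  move=> /andP[? ?] /andP[? ?] /andP[? ?] /andP[? ?] /andP[? ?] /andP[? ?].
  move=> /andP[? ?] /andP[? ?] /andP[? ?].
  suff : 0 < sl by move=> h; split; [lia | move=> h'; exfalso; lia].
  lia.
have [r1 r2] : -3 <= w1 <= 2 /\ -3 <= w2 <= 2.
  move: D0; rewrite /Dslack => D0.
  clear -D0 t1p t2p.
  move: D0 (phi_spec w1) (phi_spec w2) (phi_spec (w1 + w2)) (fl_spec w1 t1) (fl_spec w2 t2) (fl_spec (w1 + w2) (t1 + t2)).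
  set a := phi w1; set b := phi w2; set c := phi (w1+w2).
  set d := fl w1 t1; set f := fl w2 t2; set g := fl (w1+w2) (t1+t2); lia.
have c1 : w1 = -3 \/ w1 = -2 \/ w1 = -1 \/ w1 = 0 \/ w1 = 1 \/ w1 = 2 by lia.
have c2 : w2 = -3 \/ w2 = -2 \/ w2 = -1 \/ w2 = 0 \/ w2 = 1 \/ w2 = 2 by lia.
clear r1 r2 hD E1 E2 E3 T1 T2 T3.
case: c1 => [c1|[c1|[c1|[c1|[c1|c1]]]]];
case: c2 => [c2|[c2|[c2|[c2|[c2|c2]]]]];
subst w1 w2; move: D0 f1 f2 f12;
rewrite /mslack /Dslack /Ghat /Fine /phi /Cc /kk /fl /zc /sfacts /= ?andbT;
repeat case: ifP => ?; move=> D0 f1 f2 f12; lia.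
Qed.


Definition HH (W K h : int) : int := 3 * W + K + h.
Definition isA (W K h : int) (x : int) : bool := (x != - HH W K h) && (x != h).
Definition cA (W K h : int) (s : seq int) : nat := count (isA W K h) s.
Definition cN (W K h : int) (s : seq int) : nat := count (pred1 (- HH W K h)) s.
Definition cH (h : int) (s : seq int) : nat := count (pred1 h) s.
Definition beta (W K h : int) (s : seq int) : int := \sum_(x <- s | isA W K h x) (x - W).
Definition wv (W K h : int) s : int := (cA W K h s)%:Z - 3 * (cN W K h s)%:Z.
Definition ev (W K h : int) s : int := beta W K h s - (cN W K h s)%:Z * (K + h).
Definition tv (W K h : int) s : int := (cH h s)%:Z * h.
Definition Gs (W K h Y : int) s : int :=
  5 * W * ((cA W K h s)%:Z - 1) + 5 * beta W K h s
  + Ghat W Y (wv W K h s) (ev W K h s) (tv W K h s).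

Lemma sum_decomp (W K h : int) s : 0 <= W -> 0 <= K -> 0 < h ->
  \sum_(x <- s) x = W * wv W K h s + ev W K h s + tv W K h s.
Proof.
move=> hW hK hh; rewrite /wv /ev /tv /beta /cA /cN /cH /HH.
elim: s => [|x s IH]; first by rewrite !big_nil /=; lia.
rewrite !big_cons /= IH /isA /HH.
have hne : (- (3 * W + K + h) == h) = false by apply/negbTE; lia.
case: (eqVneq x (- (3 * W + K + h))) => [->|hx] /=.
  rewrite ?eqxx ?hne /=; lia.
case: (eqVneq x h) => [->|hx2] /=; lia.
Qed.

Lemma tvalue_sum t : tvalue t = \sum_(x <- leaves t) x.
Proof.
elim: t => [z|l IHl r IHr] /=; first by rewrite big_seq1.
by rewrite big_cat /= IHl IHr.
Qed.

Lemma beta_bounds (W K h : int) s :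
  (forall x, x \in s -> isA W K h x -> K + 1 <= 4 * (x - W) /\ 2 * (x - W) <= K - 1) ->
  (cA W K h s)%:Z * (K + 1) <= 4 * beta W K h s /\
  2 * beta W K h s <= (cA W K h s)%:Z * (K - 1).
Proof.
rewrite /cA /beta; elim: s => [|x s IH] hx; first by rewrite big_nil /=; lia.
rewrite big_cons /=.
have [] := IH (fun y hy => hx y ltac:(by rewrite inE hy orbT)).
case: ifP => hA /=.
  have [] := hx x (mem_head _ _) hA; lia.
lia.
Qed.


Definition sumB (B : seq int) : int := \sum_(x <- B) x.

Lemma sumB_cat s1 s2 : sumB (s1 ++ s2) = sumB s1 + sumB s2.
Proof. by rewrite /sumB big_cat. Qed.

Lemma cA_cat (W K h : int) s1 s2 : cA W K h (s1 ++ s2) = (cA W K h s1 + cA W K h s2)%N.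
Proof. by rewrite /cA count_cat. Qed.
Lemma cN_cat (W K h : int) s1 s2 : cN W K h (s1 ++ s2) = (cN W K h s1 + cN W K h s2)%N.
Proof. by rewrite /cN count_cat. Qed.
Lemma cH_cat (h : int) s1 s2 : cH h (s1 ++ s2) = (cH h s1 + cH h s2)%N.
Proof. by rewrite /cH count_cat. Qed.
Lemma beta_cat (W K h : int) s1 s2 : beta W K h (s1 ++ s2) = beta W K h s1 + beta W K h s2.
Proof. by rewrite /beta big_cat. Qed.
Lemma wv_cat (W K h : int) s1 s2 : wv W K h (s1 ++ s2) = wv W K h s1 + wv W K h s2.
Proof. rewrite /wv cA_cat cN_cat; lia. Qed.
Lemma ev_cat (W K h : int) s1 s2 : ev W K h (s1 ++ s2) = ev W K h s1 + ev W K h s2.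
Proof. rewrite /ev beta_cat cN_cat; lia. Qed.
Lemma tv_cat (W K h : int) s1 s2 : tv W K h (s1 ++ s2) = tv W K h s1 + tv W K h s2.
Proof. rewrite /tv cH_cat; lia. Qed.

Lemma sum_split (W K h : int) s : 0 <= W -> 0 <= K -> 0 < h ->
  sumB s = sumB (filter (isA W K h) s) - (cN W K h s)%:Z * HH W K h + (cH h s)%:Z * h.
Proof.
move=> hW hK hh; rewrite /sumB /cN /cH.
elim: s => [|x s IH]; first by rewrite !big_nil /=; lia.
rewrite /= big_cons.
have hne : (- HH W K h == h) = false by apply/negbTE; rewrite /HH; lia.
case hA: (isA W K h x); rewrite ?big_cons IH.
  move: hA; rewrite /isA => /andP[/negbTE -> /negbTE ->] /=; lia.
move: hA; rewrite /isA; case: (eqVneq x (- HH W K h)) => [->|hx] /=.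
  rewrite hne /=; lia.
move=> /negbFE /eqP ->; rewrite eqxx /=; lia.
Qed.

Lemma filter_nil (W K h : int) s : cA W K h s = 0%N -> filter (isA W K h) s = [::].
Proof.
rewrite /cA; elim: s => [|x s IH] //=; case: ifP => //= _ hc; exact: IH.
Qed.

Definition blocksOK (W K h : int) (s : seq int) : Prop :=
  cA W K h s = (3 * cN W K h s)%N /\ exists bl : seq (seq int),
   [/\ perm_eq (flatten bl) (filter (isA W K h) s), size bl = cN W K h s,
       all (fun B => (sumB B == 3 * W + K) || (sumB B == 3 * W + K + h)) bl &
       count (fun B => sumB B == 3 * W + K) bl = cH h s].

Definition Pk (W K h : int) (s : seq int) : Prop :=
  [/\ cA W K h s = 1, cN W K h s = 0 & cH h s = 0]%N \/
  [/\ cA W K h s = 2, cN W K h s = 0 & cH h s = 0]%N \/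
  [/\ cA W K h s = 2, cN W K h s = 1 & cH h s = 0]%N \/
  [/\ cA W K h s = 0, cN W K h s = 1 & cH h s = 0]%N \/
  [/\ cA W K h s = 0, cN W K h s = 0 & cH h s = 1]%N \/
  ([/\ cA W K h s = 3, cN W K h s = 1 & cH h s = 0]%N /\ sumB s <= 0) \/
  blocksOK W K h s.

Lemma blocks_sum (L h : int) (bl : seq (seq int)) : h != 0 ->
  all (fun B => (sumB B == L) || (sumB B == L + h)) bl ->
  \sum_(B <- bl) sumB B = (size bl)%:Z * L + ((size bl)%:Z - (count (fun B => sumB B == L) bl)%:Z) * h.
Proof.
move=> hh; elim: bl => [|B bl IH] /=; first by rewrite big_nil; lia.
rewrite big_cons => /andP[hB /IH ->].
case/orP: hB => /eqP ->.
  rewrite eqxx /=; lia.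
have -> : (L + h == L) = false by apply/negbTE; lia.
rewrite /=; lia.
Qed.

Lemma bal_sum (W K h : int) s : 0 <= W -> 0 <= K -> 0 < h ->
  blocksOK W K h s -> sumB s = 0.
Proof.
move=> hW hK hh [_ [bl [hp hs ha hc]]].
rewrite (sum_split _ _ _ _ hW hK hh).
have -> : sumB (filter (isA W K h) s) = \sum_(B <- bl) sumB B.
  by rewrite /sumB -(perm_big _ hp) big_flatten.
rewrite (blocks_sum (3 * W + K) h bl) //; last by lia.
rewrite hs hc /HH; lia.
Qed.

Lemma blocksOK_cat (W K h : int) s1 s2 :
  blocksOK W K h s1 -> blocksOK W K h s2 -> blocksOK W K h (s1 ++ s2).
Proof.
move=> [ha1 [bl1 [p1 z1 a1 c1]]] [ha2 [bl2 [p2 z2 a2 c2]]]; split.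
  by rewrite cA_cat cN_cat ha1 ha2 mulnDr.
exists (bl1 ++ bl2); split.
- by rewrite flatten_cat filter_cat perm_cat.
- by rewrite size_cat cN_cat z1 z2.
- by rewrite all_cat a1 a2.
- by rewrite count_cat cH_cat c1 c2.
Qed.

Lemma single_block (W K h : int) s : 0 <= W -> 0 <= K -> 0 < h ->
  cA W K h s = 3%N -> cN W K h s = 1%N -> sumB s = 0 ->
  (cH h s = 1%N \/ cH h s = 0%N) ->
  blocksOK W K h s.
Proof.
move=> hW hK hh ha hn hs hq; split; first by rewrite ha hn.
have sp := sum_split _ _ _ s hW hK hh; rewrite /HH in sp; rewrite hn hs in sp.
exists [:: filter (isA W K h) s]; split.
- by rewrite /= cats0.
- by rewrite hn.
- rewrite /= andbT; case: hq => e2; move: sp; rewrite e2 => sp.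
    apply/orP; left; apply/eqP; lia.
  apply/orP; right; apply/eqP; lia.
- rewrite /= addn0; case: hq => e2; move: sp; rewrite e2 => sp.
    by have -> : (sumB (filter (isA W K h) s) == 3 * W + K) by apply/eqP; lia.
  by have -> : (sumB (filter (isA W K h) s) == 3 * W + K) = false by apply/negbTE; lia.
Qed.


Lemma zc_cases (w1 w2 e t : int) : zc w1 w2 e t ->
  (w1 = 1 /\ w2 = 1 /\ t = 0) \/ (w1 = 2 /\ w2 = -3 /\ t = 0) \/
  (w1 = -3 /\ w2 = 2 /\ t = 0) \/ (w1 = 0 /\ w2 = 0 /\ e + t = 0) \/
  (w1 = 1 /\ w2 = -1 /\ t = 0 /\ e <= 0) \/ (w1 = -1 /\ w2 = 1 /\ t = 0 /\ e <= 0).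
Proof.
rewrite /zc.
case: ifP => [/andP[/eqP -> /eqP ->] h|_]; first by lia.
case: ifP => [/orP[/andP[/eqP -> /eqP ->]|/andP[/eqP -> /eqP ->]] [h1 h2]|_]; first by lia.
  by lia.
case: ifP => // /orP[/andP[/eqP -> /eqP ->]|/orP[/andP[/eqP -> /eqP ->]|/andP[/eqP -> /eqP ->]]] h; lia.
Qed.

Lemma Pk_w (W K h : int) s : Pk W K h s ->
  [/\ wv W K h s = 1 -> [/\ cA W K h s = 1, cN W K h s = 0 & cH h s = 0]%N,
      wv W K h s = 2 -> [/\ cA W K h s = 2, cN W K h s = 0 & cH h s = 0]%N,
      wv W K h s = -1 -> [/\ cA W K h s = 2, cN W K h s = 1 & cH h s = 0]%N,
      wv W K h s = -3 -> [/\ cA W K h s = 0, cN W K h s = 1 & cH h s = 0]%N &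
      wv W K h s = 0 -> [/\ cA W K h s = 0, cN W K h s = 0 & cH h s = 1]%N \/
         ([/\ cA W K h s = 3, cN W K h s = 1 & cH h s = 0]%N /\ sumB s <= 0) \/
         blocksOK W K h s].
Proof.
rewrite /wv.
case=> [[a n q]|[[a n q]|[[a n q]|[[a n q]|[[a n q]|[[[a n q] hs]|hb]]]]]].
- rewrite a n q; split => hw //; lia.
- rewrite a n q; split => hw //; lia.
- rewrite a n q; split => hw //; lia.
- rewrite a n q; split => hw //; lia.
- rewrite a n q; split => hw //; try lia; by left.
- rewrite a n q; split => hw //; try lia; by right; left.
- have hc := hb; case: hc => hc _; rewrite hc; split => hw; try lia; by right; right.
Qed.

Lemma sum_Hh (W K h : int) s : 0 <= W -> 0 <= K -> 0 < h ->
  [/\ cA W K h s = 0, cN W K h s = 0 & cH h s = 1]%N -> sumB s = h.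
Proof.
move=> hW hK hh [a n q].
rewrite (sum_split _ _ _ _ hW hK hh) (filter_nil _ _ _ _ a) n q /sumB big_nil; lia.
Qed.

Lemma mergeP (W K h : int) s1 s2 : 0 <= W -> 0 <= K -> 0 < h ->
  Pk W K h s1 -> Pk W K h s2 ->
  zc (wv W K h s1) (wv W K h s2) (ev W K h (s1 ++ s2)) (tv W K h (s1 ++ s2)) ->
  Pk W K h (s1 ++ s2).
Proof.
move=> hW hK hh P1 P2 /zc_cases Z.
have sd : sumB (s1 ++ s2) = W * (wv W K h s1 + wv W K h s2) + ev W K h (s1 ++ s2)
   + tv W K h (s1 ++ s2) by rewrite -wv_cat; exact: sum_decomp.
have [A1 A2 A3 A4 A5] := Pk_w _ _ _ _ P1; have [B1 B2 B3 B4 B5] := Pk_w _ _ _ _ P2.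
case: Z => [[w1 [w2 t0]]|[[w1 [w2 t0]]|[[w1 [w2 t0]]|[[w1 [w2 et]]|[[w1 [w2 [t0 e0]]]|[w1 [w2 [t0 e0]]]]]]]].
- have [a1 n1 q1] := A1 w1; have [a2 n2 q2] := B1 w2.
  rewrite /Pk cA_cat cN_cat cH_cat a1 n1 q1 a2 n2 q2.
  by right; left.
- have [a1 n1 q1] := A2 w1; have [a2 n2 q2] := B4 w2.
  rewrite /Pk cA_cat cN_cat cH_cat a1 n1 q1 a2 n2 q2.
  by do 2 right; left.
- have [a1 n1 q1] := A4 w1; have [a2 n2 q2] := B2 w2.
  rewrite /Pk cA_cat cN_cat cH_cat a1 n1 q1 a2 n2 q2.
  by do 2 right; left.
- rewrite w1 w2 in sd.
  have s0 : sumB (s1 ++ s2) = 0 by lia.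
  move: s0; rewrite sumB_cat => s0.
  have bs1 := @bal_sum W K h s1 hW hK hh.
  have bs2 := @bal_sum W K h s2 hW hK hh.
  have hs1 := @sum_Hh W K h s1 hW hK hh.
  have hs2 := @sum_Hh W K h s2 hW hK hh.
  case: (A5 w1) => [k1|[[k1 g1]|k1]]; case: (B5 w2) => [k2|[[k2 g2]|k2]].
  + have := hs1 k1; have := hs2 k2; lia.
  + do 6 right; case: k1 => a1 n1 q1; case: k2 => a2 n2 q2.
    apply: single_block => //; rewrite ?cA_cat ?cN_cat ?cH_cat ?sumB_cat.
    * by rewrite a1 a2.
    * by rewrite n1 n2.
    * by [].
    * by rewrite q1 q2; left.
  + have := hs1 k1; have := bs2 k2; lia.
  + do 6 right; case: k1 => a1 n1 q1; case: k2 => a2 n2 q2.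
    apply: single_block => //; rewrite ?cA_cat ?cN_cat ?cH_cat ?sumB_cat.
    * by rewrite a1 a2.
    * by rewrite n1 n2.
    * by [].
    * by rewrite q1 q2; left.
  + do 6 right; case: k1 => a1 n1 q1; case: k2 => a2 n2 q2.
    apply: blocksOK_cat; apply: single_block => //; try lia; by right.
  + do 6 right; apply: blocksOK_cat => //; case: k1 => a1 n1 q1.
    apply: single_block => //; try lia; have := bs2 k2; lia.
  + have := hs2 k2; have := bs1 k1; lia.
  + do 6 right; apply: blocksOK_cat => //; case: k2 => a2 n2 q2.
    apply: single_block => //; try lia; have := bs1 k1; lia.
  + by do 6 right; apply: blocksOK_cat.
- have [a1 n1 q1] := A1 w1; have [a2 n2 q2] := B3 w2.
  rewrite w1 w2 in sd.
  rewrite /Pk cA_cat cN_cat cH_cat a1 n1 q1 a2 n2 q2.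
  do 5 right; left; split => //; lia.
- have [a1 n1 q1] := A3 w1; have [a2 n2 q2] := B1 w2.
  rewrite w1 w2 in sd.
  rewrite /Pk cA_cat cN_cat cH_cat a1 n1 q1 a2 n2 q2.
  do 5 right; left; split => //; lia.
Qed.


Lemma sfacts_of (K h Y m p n q b : int) :
  1 <= K -> 3 * K <= h -> Y = m * (K + h) + 1 -> 0 <= p <= 3 * m -> 0 <= n <= m ->
  0 <= q <= m -> p * (K + 1) <= 4 * b -> 2 * b <= p * (K - 1) ->
  sfacts K Y (p - 3 * n) (b - n * (K + h)) (q * h).
Proof.
move=> hK hh hY /andP[p0 pm] /andP[n0 nm] /andP[q0 qm] b1 b2.
have nh : 3 * (n * K) <= n * h by nia.
have nK : n * K <= m * K by nia.
have nh2 : n * h <= m * h by nia.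
have pK : p * K <= 3 * (m * K) by nia.
have qh : q * h <= m * h by nia.
have qh0 : 0 <= q * h by nia.
have pK0 : 0 <= p * K by nia.
have nK0 : 0 <= n * K by nia.
have mK : 0 <= m * K by nia.
rewrite /sfacts; apply/and3P; split.
- apply/andP; split; nia.
- apply/andP; split; nia.
apply/and5P; split; apply/implyP => /eqP hw.
- have hp : p = 3 * n + 1 by lia.
  rewrite hp in b2.
  nia.
- have hp : p = 3 * n by lia.
  rewrite hp in b2.
  nia.
- have hp : p = 3 * n - 1 by lia.
  rewrite hp in b2.
  have : 1 <= n by lia.
  nia.
- have hp : p = 3 * n - 2 by lia.
  rewrite hp in b2.
  have : 1 <= n by lia.
  nia.
- have hp : p = 3 * n - 3 by lia.
  rewrite hp in b2.
  have : 1 <= n by lia.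
  nia.
Qed.

Definition valid (W K h m : int) (s : seq int) : Prop :=
  [/\ forall x, x \in s -> isA W K h x -> K + 1 <= 4 * (x - W) /\ 2 * (x - W) <= K - 1,
      (cA W K h s)%:Z <= 3 * m, (cN W K h s)%:Z <= m & (cH h s)%:Z <= m].

Lemma valid_catl (W K h m : int) s1 s2 : valid W K h m (s1 ++ s2) -> valid W K h m s1.
Proof.
case=> hx ha hn hq; split.
- by move=> x hx1; apply: hx; rewrite mem_cat hx1.
- move: ha; rewrite cA_cat; lia.
- move: hn; rewrite cN_cat; lia.
- move: hq; rewrite cH_cat; lia.
Qed.

Lemma valid_catr (W K h m : int) s1 s2 : valid W K h m (s1 ++ s2) -> valid W K h m s2.
Proof.
case=> hx ha hn hq; split.
- by move=> x hx1; apply: hx; rewrite mem_cat hx1 orbT.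
- move: ha; rewrite cA_cat; lia.
- move: hn; rewrite cN_cat; lia.
- move: hq; rewrite cH_cat; lia.
Qed.

Lemma valid_sfacts (W K h m : int) s : 1 <= K -> 3 * K <= h -> 0 <= m ->
  valid W K h m s ->
  sfacts K (m * (K + h) + 1) (wv W K h s) (ev W K h s) (tv W K h s).
Proof.
move=> hK hh hm [hx ha hn hq].
have [b1 b2] := beta_bounds W K h s hx.
rewrite /wv /ev /tv; apply: sfacts_of => //; lia.
Qed.

Lemma Ghat1 (W Y e : int) : Ghat W Y 1 e 0 = - 5 * e.
Proof.
have -> : Ghat W Y 1 e 0 = 5 * W * (0 + 0) + (-5 * e + 5 * 1 * 0 - 5 * Y * 0) by [].
lia.
Qed.
Lemma Ghatm3 (W Y e : int) : Ghat W Y (-3) e 0 = 5 * W.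
Proof.
have -> : Ghat W Y (-3) e 0 = 5 * W * (1 + 0) + (0 * e + 5 * 1 * 0 - 5 * Y * 0) by [].
lia.
Qed.
Lemma Ghat0 (W Y e t : int) : Ghat W Y 0 e t = 5 * W - 10 * e.
Proof.
rewrite /Ghat /Fine /fl andbF.
have -> : phi 0 = 1 by [].
have -> : Cc 0 = -10 by [].
have -> : kk 0 = 0 by [].
lia.
Qed.

Lemma Gs_eq (W K h Y : int) s (p n q b : int) :
  (cA W K h s)%:Z = p -> (cN W K h s)%:Z = n -> (cH h s)%:Z = q -> beta W K h s = b ->
  Gs W K h Y s = 5 * W * (p - 1) + 5 * b + Ghat W Y (p - 3 * n) (b - n * (K + h)) (q * h).
Proof. by rewrite /Gs /wv /ev /tv => -> -> -> ->. Qed.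

Lemma leaf_G (W K h Y : int) z : 0 <= W -> 0 <= K -> 0 < h ->
  Gs W K h Y [:: z] = 0 /\ Pk W K h [:: z].
Proof.
move=> hW hK hh.
have hne : (- HH W K h == h) = false by apply/negbTE; rewrite /HH; lia.
have bz : beta W K h [:: z] = if isA W K h z then z - W else 0.
  by rewrite /beta big_cons big_nil; case: ifP => _; rewrite ?addr0.
have cAz : cA W K h [:: z] = isA W K h z :> nat by rewrite /cA /= addn0.
have cNz : cN W K h [:: z] = (z == - HH W K h) :> nat by rewrite /cN /= addn0.
have cHz : cH h [:: z] = (z == h) :> nat by rewrite /cH /= addn0.
case: (eqVneq z (- HH W K h)) => [ez|hz].
  have iA : isA W K h z = false by rewrite /isA ez eqxx.
  have e2 : (z == h) = false by rewrite ez hne.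
  have e1 : (z == - HH W K h) by apply/eqP.
  rewrite iA in cAz bz; rewrite e2 in cHz; rewrite e1 in cNz.
  rewrite /Pk cAz cNz cHz (Gs_eq W K h Y [:: z] 0 1 0 0) ?cAz ?cNz ?cHz //.
  have -> : Ghat W Y (0 - 3 * 1) (0 - 1 * (K + h)) (0 * h) = Ghat W Y (-3) (-(K + h)) 0.
    by congr Ghat; lia.
  rewrite Ghatm3; split; [lia | do 3 right; left; by []].
case: (eqVneq z h) => [ez|hz2].
  have iA : isA W K h z = false by rewrite /isA ez eqxx andbF.
  have e1 : (z == h) by apply/eqP.
  rewrite iA in cAz bz; rewrite e1 in cHz; rewrite (negbTE hz) in cNz.
  rewrite /Pk cAz cNz cHz (Gs_eq W K h Y [:: z] 0 0 1 0) ?cAz ?cNz ?cHz //.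
  have -> : Ghat W Y (0 - 3 * 0) (0 - 0 * (K + h)) (1 * h) = Ghat W Y 0 0 h.
    by congr Ghat; lia.
  rewrite Ghat0; split; [lia | do 4 right; left; by []].
have iA : isA W K h z = true by rewrite /isA hz hz2.
rewrite iA in cAz bz; rewrite (negbTE hz2) in cHz; rewrite (negbTE hz) in cNz.
rewrite /Pk cAz cNz cHz (Gs_eq W K h Y [:: z] 1 0 0 (z - W)) ?cAz ?cNz ?cHz //.
have -> : Ghat W Y (1 - 3 * 0) (z - W - 0 * (K + h)) (0 * h) = Ghat W Y 1 (z - W) 0.
  by congr Ghat; lia.
rewrite Ghat1; split; [lia | left; by []].
Qed.

Lemma tree_main (W K h m : int) t : 1 <= K -> 3 * K <= h -> 0 <= m ->
  100 * (m * (K + h) + 1) <= W ->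
  valid W K h m (leaves t) ->
  Gs W K h (m * (K + h) + 1) (leaves t) <= 5 * tcost t /\
  (5 * tcost t = Gs W K h (m * (K + h) + 1) (leaves t) -> Pk W K h (leaves t)).
Proof.
move=> hK hh hm hW.
have hY : 1 <= m * (K + h) + 1.
  have : 0 <= m * (K + h) by apply: mulr_ge0; lia.
  lia.
have hW0 : 0 <= W by lia.
have hK0 : 0 <= K by lia.
have hh0 : 0 < h by lia.
set Y := m * (K + h) + 1.
elim: t => [z|l IHl r IHr] /=.
  move=> _; have [-> hp] := leaf_G W K h Y z hW0 hK0 hh0; split => //; lia.
set ll := leaves l; set lr := leaves r => hv.
have vl := valid_catl _ _ _ _ _ _ hv; have vr := valid_catr _ _ _ _ _ _ hv.
have [Gl El] := IHl vl; have [Gr Er] := IHr vr.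
have f1 := valid_sfacts _ _ _ _ _ hK hh hm vl; have f2 := valid_sfacts _ _ _ _ _ hK hh hm vr.
have f12 := valid_sfacts _ _ _ _ _ hK hh hm hv; rewrite wv_cat ev_cat tv_cat in f12.
have hK1 : 0 < K by lia.
have [ms mz] := merge_core W Y K _ _ _ _ _ _ hK1 hY hW f1 f2 f12.
have sv : tvalue l + tvalue r = W * (wv W K h ll + wv W K h lr)
   + (ev W K h ll + ev W K h lr) + (tv W K h ll + tv W K h lr).
  rewrite !tvalue_sum -big_cat -/ll -/lr.
  rewrite (sum_decomp W K h (ll ++ lr) hW0 hK0 hh0) wv_cat ev_cat tv_cat //.
have key : mslack W Y (wv W K h ll) (wv W K h lr) (ev W K h ll) (ev W K h lr)
    (tv W K h ll) (tv W K h lr)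
  = 5 * `|tvalue l + tvalue r| + Gs W K h Y ll + Gs W K h Y lr - Gs W K h Y (ll ++ lr).
  rewrite sv /mslack /Gs cA_cat beta_cat wv_cat ev_cat tv_cat PoszD; ring.
move: ms key Gl Gr El Er mz.
set MS := mslack _ _ _ _ _ _ _ _.
set g1 := Gs W K h Y ll; set g2 := Gs W K h Y lr; set g3 := Gs W K h Y (ll ++ lr).
set av := `|tvalue l + tvalue r|; set c1 := tcost l; set c2 := tcost r.
move=> ms key Gl Gr El Er mz.
split; first by lia.
move=> heq.
have hz : MS = 0 by lia.
have Pl : Pk W K h ll by apply: El; lia.
have Pr : Pk W K h lr by apply: Er; lia.
apply: mergeP => //; rewrite ev_cat tv_cat; exact: mz.
Qed.


Lemma perm_map_split (I : eqType) (a : I -> int) (B C : seq int) (r : seq I) :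
  perm_eq (B ++ C) (map a r) ->
  exists r1 r2, [/\ perm_eq r (r1 ++ r2), perm_eq B (map a r1) & perm_eq C (map a r2)].
Proof.
elim: B r => [|x B IH] r /= hp.
  by exists [::], r; split.
have [i hi ex] : exists2 i, i \in r & x = a i.
  by apply/mapP; rewrite -(perm_mem hp) inE eqxx.
subst x.
have hr := perm_to_rem hi.
have : perm_eq (a i :: (B ++ C)) (a i :: map a (rem i r)).
  by apply: (perm_trans hp); rewrite -map_cons; apply: perm_map.
rewrite perm_cons => /IH [r1 [r2 [h1 h2 h3]]].
exists (i :: r1), r2; split => //.
- by apply: (perm_trans hr); rewrite cat_cons perm_cons.
- by rewrite /= perm_cons.
Qed.

Lemma sum_cond_in (I : eqType) (r : seq I) (P Q : pred I) (F : I -> int) :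
  (forall i, i \in r -> P i = Q i) ->
  \sum_(i <- r | P i) F i = \sum_(i <- r | Q i) F i.
Proof.
elim: r => [|x r IH] h; first by rewrite !big_nil.
have hx : P x = Q x by apply: h; exact: mem_head.
have hr : forall i, i \in r -> P i = Q i.
  by move=> i hi; apply: h; rewrite inE hi orbT.
by rewrite !big_cons hx (IH hr).
Qed.

Lemma blocks_index (I : eqType) (a : I -> int) (bl : seq (seq int)) (r : seq I) :
  uniq r -> perm_eq (flatten bl) (map a r) ->
  exists f : I -> nat, (forall i, i \in r -> (f i < size bl)%N) /\
    forall j, (j < size bl)%N -> \sum_(i <- r | f i == j) a i = \sum_(x <- nth [::] bl j) x.
Proof.
elim: bl r => [|B bl IH] r ur /= hp.
  have : r = [::] by move: (perm_size hp); rewrite size_map => /esym/size0nil.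
  by move=> er; exists (fun _ => 0%N); split => // i; rewrite er.
have [r1 [r2 [h1 h2 h3]]] := perm_map_split _ _ _ _ _ hp.
have u12 : uniq (r1 ++ r2) by rewrite -(perm_uniq h1).
have ur2 : uniq r2 by move: u12; rewrite cat_uniq => /and3P[].
have [f' [hf1 hf2]] := IH r2 ur2 h3.
have dis : forall i, i \in r2 -> i \notin r1.
  move: u12; rewrite cat_uniq => /and3P[_ hn _] i hi; apply/negP => hi1.
  by move/hasP: hn; apply; exists i.
exists (fun i => if i \in r1 then 0%N else (f' i).+1); split.
  move=> i; rewrite (perm_mem h1) mem_cat; case: ifP => //= _ /= hi; exact: hf1.
move=> j hj; rewrite (perm_big _ h1) big_cat /=.
case: j hj => [|j] hj /=.
  rewrite (@sum_cond_in _ r1 _ predT); last by move=> i ->.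
  rewrite (@sum_cond_in _ r2 _ pred0); last first.
    by move=> i hi; rewrite (negbTE (dis i hi)).
  rewrite big_pred0_eq addr0.
  by rewrite (perm_big _ h2) big_map.
rewrite (@sum_cond_in _ r1 _ pred0); last by move=> i ->.
rewrite big_pred0_eq add0r.
rewrite (@sum_cond_in _ r2 _ (fun i => f' i == j)); last first.
  by move=> i hi; rewrite (negbTE (dis i hi)).
exact: hf2.
Qed.


Definition btree (h H : int) (xs : seq int) : tree :=
  match xs with
  | [:: x1; x2; x3] => Node (Leaf h) (Node (Leaf x1) (Node (Leaf (- H)) (Node (Leaf x2) (Leaf x3))))
  | _ => Leaf 0
  end.

Fixpoint comb (ts : seq tree) : tree :=
  match ts with
  | [::] => Leaf 0
  | t :: ts' => match ts' with [::] => t | _ => Node t (comb ts') end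
  end.

Lemma comb_props (ts : seq tree) : ts <> [::] -> all (fun t => tvalue t == 0) ts ->
  [/\ tvalue (comb ts) = 0, tcost (comb ts) = \sum_(t <- ts) tcost t &
      leaves (comb ts) = flatten (map leaves ts)].
Proof.
elim: ts => [|t ts IH] // _ /= /andP[/eqP ht hv].
case: ts IH hv => [|t' ts'] IH hv.
  by rewrite /= big_seq1 cats0; split.
have [v1 c1 l1] := IH (fun e => ltac:(discriminate)) hv.
split.
- by rewrite /= ht v1 addr0.
- by rewrite /= ht v1 addr0 normr0 add0r c1 big_cons.
- by rewrite /= l1.
Qed.

Lemma btree_props (h H x1 x2 x3 : int) :
  0 < x1 -> 0 < x2 -> 0 < x3 -> 0 <= h -> x1 + x2 + x3 + h = H ->
  [/\ tvalue (btree h H [:: x1; x2; x3]) = 0,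
      tcost (btree h H [:: x1; x2; x3]) = H + h &
      leaves (btree h H [:: x1; x2; x3]) = [:: h; x1; - H; x2; x3]].
Proof.
move=> p1 p2 p3 ph hH; rewrite /btree /=; split => //; lia.
Qed.

Lemma sum_nat_count (I : Type) (E : seq I) (b : pred I) :
  \sum_(j <- E) (b j : nat) = count b E.
Proof. by elim: E => [|x E IH]; rewrite ?big_nil ?big_cons ?IH. Qed.

Lemma count_partition (n m : nat) (f : 'I_n -> 'I_m) (Q : pred 'I_n) (r : seq 'I_n) :
  \sum_(j <- enum 'I_m) count (fun i => Q i && (f i == j)) r = count Q r.
Proof.
elim: r => [|x r IH] /=; first by rewrite big1_eq.
rewrite big_split /= IH; congr (_ + _)%N.
case: (Q x) => /=; last by rewrite big1_eq.
rewrite sum_nat_count.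
have -> : count (fun j => f x == j) (enum 'I_m) = count_mem (f x) (enum 'I_m).
  by apply: eq_count => j; rewrite eq_sym.
by rewrite count_uniq_mem ?enum_uniq // mem_enum.
Qed.

Lemma sum_const_tree (ts : seq tree) (c : int) : all (fun t => tcost t == c) ts ->
  \sum_(t <- ts) tcost t = (size ts)%:Z * c.
Proof.
elim: ts => [|t ts IH] /=; first by rewrite big_nil mul0r.
move=> /andP[/eqP h1 h2]; rewrite big_cons h1 IH //; lia.
Qed.

Lemma sum_nat_const_seq (I : Type) (E : seq I) (c : nat) : (\sum_(j <- E) c)%N = (size E * c)%N.
Proof. by elim: E => [|x E IH]; rewrite ?big_nil ?big_cons ?IH //= mulSn. Qed.

Lemma construct (n m : nat) (a : 'I_n -> int) (f : 'I_n -> 'I_m) (h H : int) :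
  (0 < m)%N -> (forall i, 0 < a i) -> 0 <= h ->
  (forall j, size [seq i <- enum 'I_n | f i == j] = 3%N) ->
  (forall j, \sum_(i <- enum 'I_n | f i == j) a i + h = H) ->
  exists T, perm_eq (leaves T) (map a (enum 'I_n) ++ nseq m (- H) ++ nseq m h) /\
            tcost T = m%:Z * (H + h).
Proof.
move=> m0 apos h0 hsz hsum.
pose blk j := [seq i <- enum 'I_n | f i == j].
have hb : forall j, exists i1 i2 i3, blk j = [:: i1; i2; i3].
  move=> j; move: (hsz j); rewrite -/(blk j).
  by case: (blk j) => [|i1 [|i2 [|i3 [|? ?]]]] //= _; exists i1, i2, i3.
pose ts := [seq btree h H (map a (blk j)) | j <- enum 'I_m].
have hprops : forall j, [/\ tvalue (btree h H (map a (blk j))) = 0,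
    tcost (btree h H (map a (blk j))) = H + h &
    forall P : pred int, count P (leaves (btree h H (map a (blk j)))) =
      (P h + P (- H) + count (fun i => P (a i) && (f i == j)) (enum 'I_n))%N].
  move=> j; have [i1 [i2 [i3 e]]] := hb j.
  have hs : a i1 + a i2 + a i3 + h = H.
    by rewrite -(hsum j) -big_filter -/(blk j) e !big_cons big_nil; lia.
  have [v c l] := btree_props _ _ _ _ _ (apos i1) (apos i2) (apos i3) h0 hs.
  rewrite e; split => // P.
  have hcf : count (fun i => P (a i) && (f i == j)) (enum 'I_n) = count (fun i => P (a i)) (blk j).
    by rewrite /blk count_filter.
  rewrite l hcf e /=; lia.
exists (comb ts).
have tsn : ts <> [::].
  rewrite /ts; case E: (enum 'I_m) => [|x s] //.
  by move: (size_enum_ord m); rewrite E /= => e; move: m0; rewrite -e.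
have tsv : all (fun t => tvalue t == 0) ts.
  by rewrite /ts all_map; apply/allP => j _ /=; have [-> _ _] := hprops j.
have [_ hc hl] := comb_props _ tsn tsv.
split.
  apply/permP => P.
  rewrite hl count_flatten.
  rewrite (_ : [seq count P i | i <- [seq leaves i | i <- ts]] =
     [seq (P h + P (- H) + count (fun i => P (a i) && (f i == j)) (enum 'I_n))%N | j <- enum 'I_m]); last first.
    by rewrite /ts -!map_comp; apply: eq_map => j /=; have [_ _ ->] := hprops j.
  rewrite sumnE big_map big_split sum_nat_const_seq count_partition size_enum_ord.
  rewrite !count_cat [count P (map a _)]count_map !count_nseq.
  have e1 : count (preim a P) (enum 'I_n) = count (fun i => P (a i)) (enum 'I_n) by apply: eq_count.
  rewrite e1; set c := count _ (enum 'I_n); rewrite /=; lia.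
rewrite hc (sum_const_tree _ (H + h)); first by rewrite size_map size_enum_ord.
by rewrite /ts all_map; apply/allP => j _ /=; have [_ -> _] := hprops j.
Qed.


Lemma nums (m K : nat) : (0 < m)%N -> (0 < K)%N ->
  let W := (100 * (5 * m) ^ 2 * K)%N in let L := (3 * W + K)%N in
  let h := ((4 * L) %/ (400 * (5 * m) ^ 2))%N in
  [/\ (3 * K <= h)%N, (h <= 4 * K)%N & (100 * (m * (K + h) + 1) <= W)%N].
Proof.
move=> m0 K0 W L h.
have D0 : (0 < 400 * (5 * m) ^ 2)%N by rewrite muln_gt0 expn_gt0 muln_gt0 m0.
set M2 := ((5 * m) ^ 2)%N in D0 W L h *.
have M2e : M2 = (25 * (m * m))%N by rewrite /M2 expnMn; lia.
have h1 : (3 * K <= h)%N by rewrite /h leq_divRL //; rewrite /L /W; nia.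
have h2 : (h <= 4 * K)%N.
  rewrite -ltnS /h ltn_divLR //; rewrite /L /W; nia.
split => //.
rewrite /W M2e; nia.
Qed.

Lemma Posz_sum (I : Type) (r : seq I) (F : I -> nat) :
  ((\sum_(i <- r) F i)%N)%:Z = \sum_(i <- r) (F i)%:Z.
Proof. by elim: r => [|x r IH]; rewrite ?big_nil ?big_cons // PoszD IH. Qed.

Lemma perm_enum_index (n : nat) : perm_eq (enum 'I_n) (index_enum 'I_n).
Proof.
apply: uniq_perm; [exact: enum_uniq | exact: index_enum_uniq |].
by move=> i; rewrite mem_enum mem_index_enum.
Qed.


Theorem lemma2p10 (m K : nat) (b : 'I_(3 * m) -> nat) :
  (0 < m)%N -> (0 < K)%N ->
  (forall i, 0 < b i)%N ->
  (forall i, K < 4 * b i /\ 2 * b i < K)%N ->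
  (\sum_(i < 3 * m) b i = m * K)%N ->
  let W : nat := (100 * (5 * m) ^ 2 * K)%N in
  let a : 'I_(3 * m) -> int := fun i => ((b i + W)%N)%:Z in
  let L : nat := (3 * W + K)%N in
  let h : nat := ((4 * L) %/ (400 * (5 * m) ^ 2))%N in
  let H : nat := (L + h)%N in
  let X : seq int :=
    [seq a i | i <- enum 'I_(3 * m)] ++ nseq m (- H%:Z) ++ nseq m h%:Z in
  forall Tmin : tree, min_addition_tree X Tmin ->
    (m * (H + h))%N%:Z <= tcost Tmin /\
    (tcost Tmin = (m * (H + h))%N%:Z <-> three_partition m a L%:Z).
Proof.
move=> m0 K0 bpos bK bsum W a L h H X Tmin [hT hmin].
have [h3' h4' hWY'] := nums m K m0 K0.
have h3 : (3 * K <= h)%N by exact: h3'.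
have h4 : (h <= 4 * K)%N by exact: h4'.
have hWY : (100 * (m * (K + h) + 1) <= W)%N by exact: hWY'.
clear h3' h4' hWY'.
have hWK : (2500 * K <= W)%N by rewrite /W; nia.
have eL : L = (3 * W + K)%N by [].
have eH : H = (L + h)%N by [].
clearbody H; clearbody h; clearbody L; clearbody W.
pose Wz : int := W%:Z; pose Kz : int := K%:Z; pose hz : int := h%:Z; pose mz : int := m%:Z.
have HHe : HH Wz Kz hz = H%:Z by rewrite /HH /Wz /Kz /hz eH eL; lia.
have isAa : forall i, isA Wz Kz hz (a i).
  move=> i; rewrite /isA HHe /a /Wz /hz; apply/andP; split; apply/eqP; lia.
have isAH : isA Wz Kz hz (- H%:Z) = false by rewrite /isA HHe eqxx.
have isAh : isA Wz Kz hz (h%:Z) = false by rewrite /isA eqxx andbF.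
have hneH : (h%:Z == - H%:Z) = false by apply/negbTE; apply/eqP; lia.
have aneH : forall i, (a i == - H%:Z) = false by move=> i; apply/negbTE; apply/eqP; rewrite /a; lia.
have aneh : forall i, (a i == h%:Z) = false by move=> i; apply/negbTE; apply/eqP; rewrite /a; lia.
have cAX : cA Wz Kz hz X = (3 * m)%N.
  rewrite /cA /X !count_cat !count_nseq isAH isAh count_map.
  have -> : count (preim a (isA Wz Kz hz)) (enum 'I_(3 * m)) = count predT (enum 'I_(3 * m)).
    by apply: eq_count => i /=; rewrite isAa.
  rewrite count_predT size_enum_ord /=; lia.
have cNX : cN Wz Kz hz X = m.
  rewrite /cN /X !count_cat !count_nseq count_map HHe /= eqxx hneH.
  have -> : count (preim a (pred1 (- H%:Z))) (enum 'I_(3 * m)) = count pred0 (enum 'I_(3 * m)).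
    by apply: eq_count => i /=; rewrite aneH.
  rewrite count_pred0 /=; lia.
have cHX : cH hz X = m.
  rewrite /cH /X !count_cat !count_nseq count_map /= eqxx.
  have -> : (- H%:Z == h%:Z) = false by rewrite eq_sym hneH.
  have -> : count (preim a (pred1 hz)) (enum 'I_(3 * m)) = count pred0 (enum 'I_(3 * m)).
    by apply: eq_count => i /=; rewrite aneh.
  rewrite count_pred0 /=; lia.
have betaX : beta Wz Kz hz X = (m * K)%N%:Z.
  rewrite /beta /X !big_cat !big_nseq_cond isAH isAh big_map /=.
  rewrite (@sum_cond_in _ (enum 'I_(3 * m)) _ predT); last by move=> i _; rewrite isAa.
  rewrite (eq_bigr (fun i => (b i)%:Z)); last by move=> i _; rewrite /a /Wz; lia.
  rewrite (perm_big _ (perm_enum_index _)) -Posz_sum bsum; lia.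
have cAT : cA Wz Kz hz (leaves Tmin) = (3 * m)%N by rewrite /cA (permP hT); exact: cAX.
have cNT : cN Wz Kz hz (leaves Tmin) = m by rewrite /cN (permP hT); exact: cNX.
have cHT : cH hz (leaves Tmin) = m by rewrite /cH (permP hT); exact: cHX.
have bT : beta Wz Kz hz (leaves Tmin) = (m * K)%N%:Z by rewrite /beta (perm_big _ hT); exact: betaX.
have vT : valid Wz Kz hz mz (leaves Tmin).
  split; last by rewrite ?cAT ?cNT ?cHT /mz; lia.
  - move=> x hx hA.
    have : x \in X by rewrite -(perm_mem hT).
    rewrite /X !mem_cat => /orP[/mapP[i _ ->]|/orP[]].
    + have [k1 k2] := bK i; rewrite /a /Wz /Kz; split; lia.
    + rewrite mem_nseq => /andP[_ /eqP ex]; by rewrite ex isAH in hA.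
    + rewrite mem_nseq => /andP[_ /eqP ex]; by rewrite ex isAh in hA.
  - rewrite cAT /mz; lia.
  - rewrite cNT /mz; lia.
pose Y := mz * (Kz + hz) + 1.
have GT : Gs Wz Kz hz Y (leaves Tmin) = 5 * (m * (H + h))%N%:Z.
  rewrite (Gs_eq _ _ _ _ _ (3 * m)%N%:Z m%:Z m%:Z (m * K)%N%:Z) ?cAT ?cNT ?cHT ?bT //.
  have -> : (3 * m)%N%:Z - 3 * m%:Z = 0 by lia.
  rewrite Ghat0 /Wz /Kz /hz eH eL; lia.
have hK1 : 1 <= Kz by rewrite /Kz; lia.
have hh3 : 3 * Kz <= hz by rewrite /Kz /hz; lia.
have hm0 : 0 <= mz by rewrite /mz; lia.
have hW100 : 100 * (mz * (Kz + hz) + 1) <= Wz by rewrite /mz /Kz /hz /Wz; lia.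
have [lb eqT] := tree_main Wz Kz hz mz Tmin hK1 hh3 hm0 hW100 vT.
rewrite -/Y GT in lb eqT.
split; first by lia.
split.
  move=> heq.
  have PT : Pk Wz Kz hz (leaves Tmin) by apply: eqT; rewrite heq.
  rewrite /Pk cAT cNT cHT in PT.
  case: PT => [[? ? ?]|[[? ? ?]|[[? ? ?]|[[? ? ?]|[[? ? ?]|[[[? ? ?] _]|hB]]]]]];
    try (exfalso; lia).
  case: hB => _ [bl [hp hs ha hc]].
  rewrite cNT in hs; rewrite cHT in hc.
  have hfX : [seq x <- X | isA Wz Kz hz x] = map a (enum 'I_(3 * m)).
    rewrite /X !filter_cat !filter_nseq isAH isAh !mul0n /= cats0.
    apply/all_filterP; rewrite all_map; apply/allP => i _ /=; exact: isAa.
  have hp2 : perm_eq (flatten bl) (map a (index_enum 'I_(3 * m))).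
    apply: (perm_trans hp); apply: (perm_trans _ (perm_map a (perm_enum_index _))).
    rewrite -hfX; exact: perm_filter.
  have [f [hf1 hf2]] := blocks_index _ a bl _ (index_enum_uniq _) hp2.
  have hall : all (fun B => sumB B == 3 * Wz + Kz) bl by rewrite all_count hc hs.
  pose j0 : 'I_m := Ordinal m0.
  exists (fun i => insubd j0 (f i)) => j.
  have fj : forall i, val (insubd j0 (f i)) = f i.
    by move=> i; rewrite insubdK //; rewrite -hs; apply: hf1; exact: mem_index_enum.
  rewrite (eq_bigl (fun i => f i == j)); last first.
    by move=> i /=; rewrite -val_eqE fj.
  have jl : (j < size bl)%N by rewrite hs.
  rewrite hf2 //.
  have : nth [::] bl j \in bl by exact: mem_nth.
  move/allP: hall => hall /hall /eqP.
  rewrite /sumB /Wz /Kz eL => ->; lia.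
case=> g hg.
have hg' : forall j, \sum_(i <- enum 'I_(3 * m) | g i == j) a i = L%:Z.
  by move=> j; rewrite (perm_big _ (perm_enum_index _)); exact: hg j.
pose bs (s : seq 'I_(3 * m)) : int := \sum_(i <- s) (b i)%:Z.
pose as_ (s : seq 'I_(3 * m)) : int := \sum_(i <- s) a i.
have sb : forall s : seq 'I_(3 * m),
    [/\ as_ s = (size s)%:Z * W%:Z + bs s,
        (size s)%:Z * (K%:Z + 1) <= 4 * bs s &
        2 * bs s <= (size s)%:Z * (K%:Z - 1)].
  elim=> [|i s [e1 e2 e3]]; first by rewrite /as_ /bs !big_nil /=; split; lia.
  have [k1 k2] := bK i.
  have -> : as_ (i :: s) = a i + as_ s by rewrite /as_ big_cons.
  have -> : bs (i :: s) = (b i)%:Z + bs s by rewrite /bs big_cons.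
  rewrite e1 /a /=; split; lia.
have hsz : forall j, size [seq i <- enum 'I_(3 * m) | g i == j] = 3%N.
  move=> j; move: (hg' j); rewrite -big_filter.
  set s := [seq i <- enum 'I_(3 * m) | g i == j].
  have [e1 e2 e3] := sb s; rewrite -/(as_ s) e1 => e.
  set c := size s in e e1 e2 e3 *.
  set B := bs s in e e1 e2 e3.
  have hWK' : (2500 * K <= W)%N by [].
  clearbody B; clear e1.
  move: e; rewrite eL => e.
  have : (c <= 2 \/ c = 3 \/ 4 <= c)%N by lia.
  case=> [hc1|[hc1|hc1]] //; exfalso; nia.
have hsum : forall j, \sum_(i <- enum 'I_(3 * m) | g i == j) a i + hz = H%:Z.
  by move=> j; rewrite hg' /hz eH; lia.
have apos : forall i, 0 < a i by move=> i; rewrite /a; lia.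
have hz0 : 0 <= hz by rewrite /hz.
have [T0 [hp0 hc0]] := construct (3 * m) m a g hz H%:Z m0 apos hz0 hsz hsum.
have := hmin T0 hp0.
rewrite hc0 /hz; lia.
Qed.
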